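(* Let $\mathbb{F}$ be a finite field, $n$ a positive integer coprime with $|\mathbb{F}|$, and $\alpha\in\mathbb{F}$ with $\mathrm{ord}(\alpha)=n$. Let $A:=\mathbb{F}[x]/\langle x^n-1\rangle$. Let $\delta\in\mathbb{N}_0$ and $G:=\sum_{\nu=0}^{\delta}z^\nu\begin{pmatrix}1&\alpha^\nu&\alpha^{2\nu}&\ldots&\alpha^{(n-1)\nu}\end{pmatrix}\in\mathbb{F}[z]^{1\times n}$. Then the $\mathbb{F}$-algebra homomorphism $\sigma:A\to A$ defined by $\sigma(x)=\alpha x$ is an $\mathbb{F}$-automorphism of $A$, and the submodule $\mathcal{C}=\mathrm{im}\,G=\{uG\mid u\in\mathbb{F}[z]\}\subseteq\mathbb{F}[z]^n$ is $\sigma$-cyclic. In particular, if $\delta<n$, then $\mathcal{C}$ is a ($\sigma$-)cyclic MDS convolutional code with parameters $(n,1,\delta)$.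
   Context: $\mathrm{ord}(\alpha)$ is the multiplicative order of $\alpha$. For $\sigma\in\mathrm{Aut}_{\mathbb{F}}(A)$, the skew polynomial ring $A[z;\sigma]$ is the set of polynomials $\sum_\nu z^\nu a_\nu$ ($a_\nu\in A$) with usual addition and multiplication determined by associativity, distributivity, the multiplication of $A$, and the rule $az=z\sigma(a)$ for $a\in A$. Let $\mathfrak{p}:\mathbb{F}^n\to A$, $(v_0,\ldots,v_{n-1})\mapsto\sum_{i=0}^{n-1}v_ix^i$, extended coefficientwise to $\mathfrak{p}:\mathbb{F}[z]^n\to A[z;\sigma]$, $\sum_\nu z^\nu v_\nu\mapsto\sum_\nu z^\nu\mathfrak{p}(v_\nu)$. A submodule $\mathcal{C}\subseteq\mathbb{F}[z]^n$ is $\sigma$-cyclic if $\mathfrak{p}(\mathcal{C})$ is a left ideal of $A[z;\sigma]$. A convolutional code with parameters $(n,1,\delta)$ is $\mathrm{im}\,G$ for a right invertible $G\in\mathbb{F}[z]^{1\times n}$ whose entries have maximum degree $\delta$; it is MDS if its free distance $\min\{\mathrm{wt}(v)\mid 0\ne v\in\mathcal{C}\}$ equals $n(\delta+1)$, where $\mathrm{wt}(\sum_j v_jz^j)=\sum_j(\text{Hamming weight of }v_j)$. *)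

(* Defs.v *)
From HB Require Import structures.
From mathcomp Require Import all_boot all_order all_algebra.
Set Implicit Arguments. Unset Strict Implicit. Unset Printing Implicit Defensive.
Import Order.TTheory GRing.Theory.
Local Open Scope ring_scope.

(* Conventions.
   - F[z] is {poly F}; its variable 'X plays the role of z.
   - F[z]^n is 'rV[{poly F}]_n  (row vectors of polynomials).
   - A = F[x]/<x^n - 1> is MathComp's quotient ring {poly %/ ('X^n - 1)}
     (a commutative F-algebra; 'qX is the class of x).
   - The skew polynomial ring A[z;sigma] is represented by {poly A}
     (the coefficient sequence (a_nu)_nu of  sum_nu z^nu a_nu), with the usual
     addition and with the skew multiplication [skmul] determined by
     a z = z sigma(a), i.e.
       (sum_i z^i a_i)(sum_j z^j b_j) = sum_k z^k (sum_{i+j=k} sigma^j(a_i) b_j). *)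

Section Defs.
Variable F : fieldType.

Definition xn1 (n : nat) : {poly F} := 'X^n - 1.

Definition Aring (n : nat) := {poly %/ xn1 n}.

Definition sigmaA (n : nat) (alpha : F) (a : Aring n) : Aring n :=
  in_qpoly (xn1 n) ((a : {poly F}) \Po (alpha *: 'X)).

Definition skmul (R : nzRingType) (sigma : R -> R) (a b : {poly R}) : {poly R} :=
  \poly_(k < size a + size b)
     \sum_(j < k.+1) iter j sigma (a`_(k - j)) * b`_j.

Definition left_ideal (R : nzRingType) (sigma : R -> R) (S : {poly R} -> Prop) :=
  [/\ S 0,
      (forall f g, S f -> S g -> S (f - g)) &
      (forall r f, S f -> S (skmul sigma r f))].

Definition pvec (n : nat) (v : 'rV[F]_n) : Aring n :=
  in_qpoly (xn1 n) (\sum_(i < n) v ord0 i *: 'X^i).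

Definition pz (n : nat) (c : 'rV[{poly F}]_n) : {poly (Aring n)} :=
  \poly_(nu < \max_(i < n) size (c ord0 i)) pvec (\row_(i < n) (c ord0 i)`_nu).

Definition pimage (n : nat) (C : 'rV[{poly F}]_n -> Prop) : {poly (Aring n)} -> Prop :=
  fun f => exists2 c, C c & f = pz c.

Definition sigma_cyclic (n : nat) (sigma : Aring n -> Aring n)
  (C : 'rV[{poly F}]_n -> Prop) : Prop :=
  left_ideal sigma (pimage C).

Definition im_mx (k n : nat) (G : 'M[{poly F}]_(k, n)) : 'rV[{poly F}]_n -> Prop :=
  fun c => exists u : 'rV[{poly F}]_k, c = u *m G.

Definition right_invertible (k n : nat) (G : 'M[{poly F}]_(k, n)) : Prop :=
  exists H : 'M[{poly F}]_(n, k), G *m H = 1%:M.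

Definition max_entry_deg (k n : nat) (G : 'M[{poly F}]_(k, n)) : nat :=
  \max_(i < k) \max_(j < n) (size (G i j)).-1.

Definition conv_code (n k delta : nat) (C : 'rV[{poly F}]_n -> Prop) : Prop :=
  exists G : 'M[{poly F}]_(k, n),
    [/\ right_invertible G, max_entry_deg G = delta &
        forall c, C c <-> im_mx G c].

Definition wt (n : nat) (v : 'rV[{poly F}]_n) : nat :=
  \sum_(i < n) count (fun a : F => a != 0%R) (v ord0 i : seq F).

Definition free_distance_eq (n : nat) (C : 'rV[{poly F}]_n -> Prop) (d : nat) : Prop :=
  (exists c, [/\ C c, c != 0 & wt c = d]) /\
  (forall c, C c -> c != 0 -> (d <= wt c)%N).

Definition MDS (n delta : nat) (C : 'rV[{poly F}]_n -> Prop) : Prop :=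
  free_distance_eq C (n * delta.+1).

Definition Gvand (n delta : nat) (alpha : F) : 'rV[{poly F}]_n :=
  \row_(i < n) \sum_(nu < delta.+1) (alpha ^+ (i * nu)) *: 'X^nu.

End Defs.

Arguments sigmaA {F} n alpha a.
Arguments conv_code {F} n k delta C.
Arguments MDS {F} n delta C.
Arguments pvec {F} n v.

(* Main.v *)
Require Import Defs.
From HB Require Import structures.
From mathcomp Require Import all_boot all_order all_algebra.
From mathcomp Require Import finfield.
From mathcomp Require Import zify.
Set Implicit Arguments. Unset Strict Implicit. Unset Printing Implicit Defensive.
Import GRing.Theory.
Import Pdiv.CommonRing Pdiv.RingMonic.

Lemma sum_two (w : nat -> nat) p1 d1 p2 d2 N :
  p1 + d1 <= p2 -> p2 + d2 <= N ->
  \sum_(j < d1) w (p1 + j) + \sum_(j < d2) w (p2 + j) <= \sum_(k < N) w k.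
Proof.
move=> h1 h2.
have sh p d : \sum_(p <= k < p + d) w k = \sum_(j < d) w (p + j).
  rewrite -{1}[p]add0n big_addn addKn big_mkord.
  by apply: eq_bigr => j _; rewrite addnC.
rewrite -!sh -(big_mkord (fun _ => true) w).
rewrite [X in _ <= X](big_cat_nat (m := 0) (n := p2) (p := N)) //=; last by lia.
rewrite [X in _ <= _ + X](big_cat_nat (m := p2) (n := p2 + d2) (p := N)) ?leq_addr //=.
rewrite [X in _ <= X + _ ](big_cat_nat (n := p1) (m := 0) (p := p2)) ?leq0n //=; last by lia.
rewrite [X in _ <= _ + X + _](big_cat_nat (n := p1 + d1) (m := p1) (p := p2)) ?leq_addr //=.
set A := \sum_(0 <= i < p1) w i; set B := \sum_(p1 <= i < p1 + d1) w i.
set C := \sum_(p1 + d1 <= i < p2) w i; set D := \sum_(p2 <= i < p2 + d2) w i.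
set E := \sum_(p2 + d2 <= i < N) w i.
lia.
Qed.

Lemma comb (w : nat -> nat) n delta a L N :
  delta < n -> a + L + delta < N ->
  (forall j, j <= delta -> n + (j - L) <= w (a + j) + j) ->
  (forall j, j <= delta -> n + j <= w (a + L + j) + delta) ->
  (forall m, L + m <= delta -> n <= w (a + L + m) + L) ->
  n * delta.+1 <= \sum_(k < N) w k.
Proof.
move=> dn hN H T M.
case: (ltnP delta L) => hL.
- have := sum_two w (p1 := a) (d1 := delta.+1) (p2 := a + L) (d2 := delta.+1) (N := N).
  move=> /(_ ltac:(lia) ltac:(lia)); apply: leq_trans.
  rewrite -big_split /=.
  apply: leq_trans (_ : \sum_(j < delta.+1) n <= _); first by rewrite sum_nat_const card_ord mulnC.
  apply: leq_sum => j _.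
  have hj : j <= delta by rewrite -ltnS ltn_ord.
  have := H j hj; have := T j hj.
  lia.
- have := sum_two w (p1 := a) (d1 := L + (delta.+1 - L)) (p2 := a + delta.+1) (d2 := L) (N := N).
  move=> /(_ ltac:(lia) ltac:(lia)).
  rewrite big_split_ord /=.
  set S1 := \sum_(j < L) w (a + j); set S2 := \sum_(j < delta.+1 - L) _.
  set S3 := \sum_(j < L) w (a + delta.+1 + j).
  have h13 : L * (2 * n + 1) <= S1 + S3 + L * L.
    rewrite /S1 /S3 -big_split /=.
    rewrite -[L in L * L]card_ord -[L in L * (2 * n + 1)]card_ord -!sum_nat_const -big_split /=.
    apply: leq_sum => m _.
    have hm : m < L by exact: ltn_ord.
    have := H m ltac:(lia).
    have := T (delta.+1 + m - L) ltac:(lia).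
    have -> : a + L + (delta.+1 + m - L) = a + delta.+1 + m by lia.
    rewrite card_ord; lia.
  have h2 : (delta.+1 - L) * n <= S2 + (delta.+1 - L) * L.
    rewrite /S2 -[X in X * L]card_ord -[X in X * n]card_ord -!sum_nat_const -big_split /=.
    apply: leq_sum => m _.
    have hm : m < delta.+1 - L by exact: ltn_ord.
    have := M m ltac:(lia).
    by rewrite /lshift /rshift /= addnA.
  move=> hs; apply: leq_trans hs.
  clearbody S1 S2 S3.
  nia.
Qed.

Local Open Scope ring_scope.

Lemma mkm (F : fieldType) n : (0 < n)%N -> mk_monic (xn1 F n) = xn1 F n.
Proof.
move=> n0; rewrite /mk_monic /xn1 size_Xn_sub_1 // ltnS n0 /=.
by rewrite -polyC1 monicXnsubC.
Qed.

Lemma qpolyK (F : fieldType) n (a : Aring F n) :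
  in_qpoly (xn1 F n) (a : {poly F}) = a.
Proof. by apply: val_inj; apply: in_qpoly_small; apply: size_mk_monic. Qed.

Lemma in_qpoly_h (F : fieldType) n : (0 < n)%N ->
  in_qpoly (xn1 F n) (xn1 F n) = 0.
Proof.
move=> n0; apply: val_inj => /=; rewrite mkm //.
rewrite -[X in rmodp X _]mul1r rmodp_mull //.
by rewrite /xn1 -polyC1 monicXnsubC.
Qed.

Lemma in_qpoly_modE (F : fieldType) n q k : (0 < n)%N ->
  in_qpoly (xn1 F n) (q + k * xn1 F n) = in_qpoly (xn1 F n) q.
Proof. by move=> n0; rewrite in_qpolyD in_qpolyM in_qpoly_h // mulr0 addr0. Qed.

Lemma xn1_comp (F : fieldType) n (b : F) : b ^+ n = 1 ->
  xn1 F n \Po (b *: 'X) = xn1 F n.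
Proof.
move=> bn; rewrite /xn1 comp_polyB comp_Xn_poly comp_polyC.
by rewrite exprZn bn scale1r.
Qed.

Lemma sigma_in (F : fieldType) n (b : F) q : (0 < n)%N -> b ^+ n = 1 ->
  sigmaA n b (in_qpoly (xn1 F n) q) = in_qpoly (xn1 F n) (q \Po (b *: 'X)).
Proof.
move=> n0 bn; rewrite /sigmaA /= mkm //.
have hm : xn1 F n \is monic by rewrite /xn1 -polyC1 monicXnsubC.
rewrite {2}(rdivp_eq hm q) comp_polyD comp_polyM xn1_comp // addrC.
by rewrite in_qpoly_modE.
Qed.

Lemma sigma_val (F : fieldType) n (b : F) (a : Aring F n) :
  sigmaA n b a = in_qpoly (xn1 F n) ((a : {poly F}) \Po (b *: 'X)).
Proof. by []. Qed.

Lemma sigma_add (F : fieldType) n (b : F) : (0 < n)%N -> b ^+ n = 1 ->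
  forall c (x y : Aring F n), sigmaA n b (c *: x + y) = c *: sigmaA n b x + sigmaA n b y.
Proof.
move=> n0 bn c x y; rewrite !sigma_val /=.
by rewrite comp_polyD comp_polyZ in_qpolyD in_qpolyZ.
Qed.

Lemma sigma_mul (F : fieldType) n (b : F) : (0 < n)%N -> b ^+ n = 1 ->
  forall (x y : Aring F n), sigmaA n b (x * y) = sigmaA n b x * sigmaA n b y.
Proof.
move=> n0 bn x y.
rewrite -[x * y]/(in_qpoly (xn1 F n) ((x : {poly F}) * y)) sigma_in //.
by rewrite comp_polyM in_qpolyM.
Qed.

Lemma sigma_one (F : fieldType) n (b : F) : (0 < n)%N -> b ^+ n = 1 ->
  sigmaA n b 1 = 1.
Proof.
move=> n0 bn; rewrite -in_qpoly1 sigma_in // comp_polyC.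
by rewrite in_qpoly1.
Qed.

Lemma sigma_comp (F : fieldType) n (b c : F) : (0 < n)%N -> b ^+ n = 1 -> c ^+ n = 1 ->
  forall x : Aring F n, sigmaA n b (sigmaA n c x) = sigmaA n (c * b) x.
Proof.
move=> n0 bn cn x; rewrite [sigmaA n c x]sigma_val sigma_in // -comp_polyA.
by rewrite comp_polyZ comp_polyX scalerA.
Qed.

Lemma sigma1 (F : fieldType) n (x : Aring F n) : sigmaA n 1 x = x.
Proof. by rewrite sigma_val scale1r comp_polyXr qpolyK. Qed.

Lemma iter_sigma (F : fieldType) n (b : F) : (0 < n)%N -> b ^+ n = 1 ->
  forall j (x : Aring F n), iter j (sigmaA n b) x = sigmaA n (b ^+ j) x.
Proof.
move=> n0 bn; elim=> [|j IH] x /=; first by rewrite sigma1.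
rewrite IH sigma_comp // ?exprSr //.
by rewrite -exprM mulnC exprM bn expr1n.
Qed.

Lemma part1 (F : fieldType) n (alpha : F) : (0 < n)%N -> alpha ^+ n = 1 ->
  [/\ linear (sigmaA n alpha) /\ monoid_morphism (sigmaA n alpha),
      bijective (sigmaA n alpha) &
      sigmaA n alpha 'qX = alpha *: 'qX].
Proof.
move=> n0 an.
have a0 : alpha != 0.
  by apply/eqP=> a0; move: an; rewrite a0 expr0n eqn0Ngt n0 /= => /eqP; rewrite eq_sym oner_eq0.
have ain : alpha^-1 ^+ n = 1 by rewrite exprVn an invr1.
split.
- split; first exact: sigma_add.
  by split; [exact: sigma_one | exact: sigma_mul].
- exists (sigmaA n alpha^-1) => x.
    by rewrite sigma_comp // mulfV // sigma1.
  by rewrite sigma_comp // mulVf // sigma1.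
- by rewrite /qpolyX sigma_in // comp_polyX in_qpolyZ.
Qed.


Definition Ev (F : fieldType) n (alpha : F) (nu : nat) : Aring F n :=
  in_qpoly (xn1 F n) (\sum_(i < n) alpha ^+ (i * nu) *: 'X^i).

Definition cf (F : fieldType) (U : {poly F}) k nu : F :=
  if (k < nu)%N then 0 else U`_(k - nu).

Lemma coef_pz (F : fieldType) n (c : 'rV[{poly F}]_n) k :
  (pz c)`_k = pvec n (\row_i (c ord0 i)`_k).
Proof.
rewrite coef_poly; case: ifP => // hk.
rewrite /pvec; transitivity (in_qpoly (xn1 F n) 0); first by rewrite in_qpoly0.
congr in_qpoly; symmetry; apply: big1 => i _; rewrite mxE.
have : (\max_(i < n) size (c ord0 i) <= k)%N by rewrite leqNgt hk.
move=> /bigmax_leqP /(_ i isT) => /leq_sizeP /(_ k (leqnn k)) ->.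
by rewrite scale0r.
Qed.

Lemma mulG_entry (F : fieldType) n (u : 'rV[{poly F}]_1) (G : 'rV[{poly F}]_n) i :
  (u *m G) ord0 i = u ord0 ord0 * G ord0 i.
Proof. by rewrite mxE big_ord1. Qed.

Lemma coef_uG (F : fieldType) n delta (alpha : F) (U : {poly F}) (i : 'I_n) k :
  (U * Gvand n delta alpha ord0 i)`_k = \sum_(nu < delta.+1) alpha ^+ (i * nu) * cf U k nu.
Proof.
rewrite mxE mulr_sumr coef_sum; apply: eq_bigr => nu _.
by rewrite -scalerAr coefZ coefMXn /cf.
Qed.

Lemma coef_pzG (F : fieldType) n delta (alpha : F) (u : 'rV[{poly F}]_1) k :
  (pz (u *m Gvand n delta alpha))`_k =
  \sum_(nu < delta.+1) cf (u ord0 ord0) k nu *: Ev n alpha nu.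
Proof.
rewrite coef_pz /pvec /Ev.
under eq_bigr => i _ do rewrite mxE mulG_entry coef_uG scaler_suml.
rewrite exchange_big /= linear_sum; apply: eq_bigr => nu _.
rewrite -linearZ /= scaler_sumr; congr in_qpoly; apply: eq_bigr => i _.
by rewrite scalerA mulrC.
Qed.

Lemma Ev_sigma (F : fieldType) n (alpha : F) nu : (0 < n)%N -> alpha ^+ n = 1 ->
  Ev n alpha nu = sigmaA n (alpha ^+ nu) (Ev n alpha 0).
Proof.
move=> n0 an; rewrite /Ev sigma_in //; last first.
  by rewrite -exprM mulnC exprM an expr1n.
rewrite [_ \Po _]linear_sum /=; congr in_qpoly; apply: eq_bigr => i _.
rewrite comp_polyZ comp_Xn_poly exprZn scalerA muln0 expr0 mul1r.
by rewrite -exprM mulnC.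
Qed.

Lemma EvM (F : fieldType) n (alpha : F) (a : Aring F n) : (0 < n)%N ->
  a * Ev n alpha 0 = (a : {poly F}).[1] *: Ev n alpha 0.
Proof.
move=> n0; rewrite -[a in LHS]qpolyK /Ev -in_qpolyM -in_qpolyZ.
set q := (a : {poly F}).
have : root (q - q.[1]%:P) 1 by rewrite rootE hornerD hornerN hornerC subrr.
case/factor_theorem => k hk.
have e0 : \sum_(i < n) alpha ^+ (i * 0) *: ('X^i : {poly F}) = \sum_(i < n) 'X^i.
  by apply: eq_bigr => i _; rewrite muln0 expr0 scale1r.
rewrite e0.
rewrite {1}(_ : q = q.[1]%:A + k * ('X - 1%:P)); last by rewrite -hk alg_polyC addrC subrK.
rewrite mulrDl -mulrA -subrX1 -/(xn1 F n) in_qpoly_modE //.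
by rewrite mulr_algl.
Qed.

Lemma sigma0 (F : fieldType) n (b : F) : sigmaA n b 0 = 0.
Proof. by rewrite sigma_val /= comp_poly0 in_qpoly0. Qed.

Lemma sigmaZ (F : fieldType) n (b : F) c (x : Aring F n) :
  sigmaA n b (c *: x) = c *: sigmaA n b x.
Proof. by rewrite !sigma_val /= comp_polyZ in_qpolyZ. Qed.

Lemma key_EvM (F : fieldType) n (alpha : F) (r : Aring F n) j nu :
  (0 < n)%N -> alpha ^+ n = 1 -> (nu <= j)%N ->
  sigmaA n (alpha ^+ j) r * Ev n alpha nu =
  ((sigmaA n (alpha ^+ (j - nu)) r : Aring F n) : {poly F}).[1] *: Ev n alpha nu.
Proof.
move=> n0 an hj.
have aX m : (alpha ^+ m) ^+ n = 1 by rewrite -exprM mulnC exprM an expr1n.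
have -> : alpha ^+ j = alpha ^+ (j - nu) * alpha ^+ nu by rewrite -exprD subnK.
rewrite -sigma_comp // Ev_sigma // -sigma_mul // EvM //.
by rewrite sigmaZ.
Qed.

Lemma coef_skmul (R : nzRingType) (sigma : R -> R)
  (s0 : forall j, iter j sigma 0 = 0) (a b : {poly R}) k :
  (skmul sigma a b)`_k = \sum_(j < k.+1) iter j sigma (a`_(k - j)) * b`_j.
Proof.
rewrite coef_poly; case: ifP => // hk; symmetry; apply: big1 => j _.
case: (ltnP j (size b)) => hj; last by rewrite (leq_sizeP _ _ hj) // mulr0.
have -> : a`_(k - j) = 0.
  apply: (leq_sizeP a (k - j)) => //.
  move: hk => /negbT; rewrite -leqNgt => hk; lia.
by rewrite s0 mul0r.
Qed.

Lemma iter_sigma0 (F : fieldType) n (b : F) j : iter j (sigmaA n b) 0 = 0.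
Proof. by elim: j => //= j ->; rewrite sigma0. Qed.

Definition sfun (F : fieldType) (n : nat) (alpha : F) (r : {poly (Aring F n)}) t m : F :=
  ((sigmaA n (alpha ^+ t) (r`_m) : Aring F n) : {poly F}).[1].

Definition Unew (F : fieldType) n (alpha : F) (r : {poly (Aring F n)}) (U : {poly F}) :=
  \poly_(m < size U + size r) \sum_(t < m.+1) U`_t * sfun alpha r t (m - t).

Lemma coef_Unew (F : fieldType) (n : nat) (alpha : F) (r : {poly (Aring F n)}) (U : {poly F}) m :
  (Unew alpha r U)`_m = \sum_(t < m.+1) U`_t * sfun alpha r t (m - t).
Proof.
rewrite coef_poly; case: ifP => // hm; symmetry; apply: big1 => t _.
case: (ltnP t (size U)) => ht; last by rewrite (leq_sizeP _ _ ht) // mul0r.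
rewrite /sfun.
have -> : r`_(m - t) = 0.
  apply: (leq_sizeP r (m - t)) => //.
  move: hm => /negbT; rewrite -leqNgt => hm; lia.
by rewrite sigma0 horner0 mulr0.
Qed.

Lemma skmul_pz (F : fieldType) n delta (alpha : F) (r : {poly (Aring F n)})
  (u : 'rV[{poly F}]_1) : (0 < n)%N -> alpha ^+ n = 1 ->
  skmul (sigmaA n alpha) r (pz (u *m Gvand n delta alpha)) =
  pz ((\row_(j < 1) Unew alpha r (u ord0 ord0)) *m Gvand n delta alpha).
Proof.
move=> n0 an; apply/polyP => k.
rewrite coef_skmul; last by move=> j; exact: iter_sigma0.
rewrite coef_pzG mxE.
under eq_bigr => j _ do rewrite coef_pzG mulr_sumr iter_sigma //.
rewrite exchange_big /=; apply: eq_bigr => nu _.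
set U := u ord0 ord0.
transitivity (\sum_(j < k.+1) (cf U j nu * sfun alpha r (j - nu) (k - j)) *: Ev n alpha nu).
  apply: eq_bigr => j _; rewrite -scalerAr.
  case: (ltnP j nu) => hj.
    by rewrite /cf hj !mul0r !scale0r.
  by rewrite key_EvM // scalerA mulrC.
rewrite -scaler_suml; congr (_ *: _).
rewrite /cf; case: (ltnP k nu) => hk.
  by rewrite big1 // => j _; rewrite (leq_trans (ltn_ord j) hk) mul0r.
rewrite coef_Unew.
rewrite -(big_mkord xpredT (fun j => (if (j < nu)%N then 0 else U`_(j - nu)) * sfun alpha r (j - nu) (k - j))).
rewrite (big_cat_nat (n := nu)) ?(leq0n, leqW hk) //=.
rewrite big_nat_cond big1 ?add0r; last first.
  by move=> j /andP [/andP [_ ->]] _; rewrite mul0r.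
rewrite -{1}(add0n nu) big_addn subSn // big_mkord.
apply: eq_bigr => t _.
rewrite ltnNge leq_addl /= addnK.
by congr (_ * sfun _ _ _ _); lia.
Qed.

Lemma part2 (F : fieldType) n delta (alpha : F) : (0 < n)%N -> alpha ^+ n = 1 ->
  sigma_cyclic (sigmaA n alpha) (im_mx (Gvand n delta alpha)).
Proof.
move=> n0 an; split.
- exists (0 *m Gvand n delta alpha); first by exists 0.
  apply/polyP => k; rewrite coef_pzG coef0 big1 // => nu _.
  by rewrite /cf mxE; case: ifP => _; rewrite ?coef0 scale0r.
- move=> f g [c [u ->] ->] [d [v ->] ->].
  exists ((u - v) *m Gvand n delta alpha); first by exists (u - v).
  apply/polyP => k; rewrite coefB !coef_pzG -sumrB; apply: eq_bigr => nu _.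
  rewrite -scalerBl; congr (_ *: _); rewrite !mxE /cf.
  by case: ifP; rewrite ?subrr // coefB.
- move=> r f [c [u ->] ->].
  exists ((\row_(j < 1) Unew alpha r (u ord0 ord0)) *m Gvand n delta alpha).
    by eexists.
  exact: skmul_pz.
Qed.


Lemma card_natr0 (F : finFieldType) : (#|F|%:R : F) = 0.
Proof.
have := reindex_inj (addIr (1 : F)) (P := xpredT) (F := id) (op := +%R) (x := 0).
rewrite big_split /= sumr_const => /eqP.
by rewrite -{1}[\sum_i i]addr0 eq_sym (inj_eq (addrI _)) eq_sym => /eqP.
Qed.

Lemma natr_n_neq0 (F : finFieldType) n : coprime n #|F| -> (n%:R : F) != 0.
Proof.
move=> cop; apply/negP => /eqP hn.
have [p pp pc] := finPcharP F.
have h1 : (p %| n)%N by rewrite (dvdn_pcharf pc) hn.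
have h2 : (p %| #|F|)%N by rewrite (dvdn_pcharf pc) card_natr0.
have : (p %| gcdn n #|F|)%N by rewrite dvdn_gcd h1 h2.
by rewrite (eqP cop) dvdn1 => /eqP p1; move: pp; rewrite p1.
Qed.

Lemma sum_pow0 (F : fieldType) n (alpha : F) nu : n.-primitive_root alpha ->
  (0 < nu < n)%N -> \sum_(i < n) alpha ^+ (i * nu) = 0.
Proof.
move=> pr /andP [nu0 nun].
have b1 : alpha ^+ nu != 1.
  rewrite -(prim_order_dvd pr); apply/negP => /dvdn_leq; rewrite nu0 => /(_ isT).
  by rewrite leqNgt nun.
have : (alpha ^+ nu - 1) * \sum_(i < n) (alpha ^+ nu) ^+ i = 0.
  by rewrite -subrX1 -exprM mulnC exprM (prim_expr_order pr) expr1n subrr.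
move/eqP; rewrite mulf_eq0 subr_eq0 (negbTE b1) /= => /eqP h.
rewrite -[RHS]h; apply: eq_bigr => i _; by rewrite -exprM mulnC.
Qed.

Lemma Gi_poly (F : fieldType) n delta (alpha : F) (i : 'I_n) :
  Gvand n delta alpha ord0 i = \poly_(nu < delta.+1) alpha ^+ (i * nu).
Proof. by rewrite mxE poly_def. Qed.

Lemma size_Gi (F : fieldType) n delta (alpha : F) (i : 'I_n) : alpha != 0 ->
  size (Gvand n delta alpha ord0 i) = delta.+1.
Proof. by move=> a0; rewrite Gi_poly size_poly_eq // expf_neq0. Qed.

Lemma sumG (F : fieldType) n delta (alpha : F) : n.-primitive_root alpha ->
  (delta < n)%N ->
  \sum_(i < n) Gvand n delta alpha ord0 i = (n%:R : F)%:P.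
Proof.
move=> pr dn.
under eq_bigr => i _ do rewrite mxE.
rewrite exchange_big big_ord_recl /= [X in _ + X]big1 ?addr0; last first.
  move=> nu _; rewrite -scaler_suml sum_pow0 ?scale0r //.
  by rewrite /= (leq_trans _ dn) // ltnS; exact: ltn_ord.
rewrite -scaler_suml expr0 alg_polyC; congr (_%:P).
under eq_bigr => i _ do rewrite muln0 expr0.
by rewrite sumr_const card_ord.
Qed.

Lemma part3 (F : finFieldType) n delta (alpha : F) : (0 < n)%N -> coprime n #|F| ->
  n.-primitive_root alpha -> (delta < n)%N ->
  conv_code n 1 delta (im_mx (Gvand n delta alpha)).
Proof.
move=> n0 cop pr dn.
have a0 : alpha != 0.
  apply/eqP=> a0; move: (prim_expr_order pr); rewrite a0 expr0n eqn0Ngt n0 /=.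
  by move/eqP; rewrite eq_sym oner_eq0.
exists (Gvand n delta alpha); split => //.
- exists (const_mx ((n%:R : F)^-1)%:P).
  apply/matrixP => i j; rewrite !ord1 [LHS]mxE [RHS]mxE /=.
  under eq_bigr => k _ do rewrite [const_mx _ _ _]mxE.
  by rewrite -mulr_suml sumG // -polyCM mulfV ?natr_n_neq0.
- rewrite /max_entry_deg big_ord1.
  under eq_bigr => j _ do rewrite size_Gi //=.
  apply/eqP; rewrite eqn_leq; apply/andP; split.
    by apply/bigmax_leqP.
  exact: (leq_bigmax (Ordinal n0)).
Qed.


Lemma sum_count (T : Type) (s : seq T) (b : pred T) :
  (\sum_(i <- s) (b i : nat))%N = count b s.
Proof. by elim: s => [|x s IH]; rewrite ?big_nil ?big_cons ?IH. Qed.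

Lemma RB (F : fieldType) n (alpha : F) (P : {poly F}) s :
  n.-primitive_root alpha -> P != 0 -> (forall nu, (nu < s)%N -> P`_nu = 0) ->
  (\sum_(i < n) ((P.[alpha ^+ i] == 0)%R : nat) + s < size P)%N.
Proof.
move=> pr P0 Ps.
have a0 : alpha != 0.
  apply/eqP=> a0; move: (prim_expr_order pr) (prim_order_gt0 pr); rewrite a0 => h n0.
  by move: h; rewrite expr0n eqn0Ngt n0 /= => /eqP; rewrite eq_sym oner_eq0.
set Q := \poly_(j < size P - s) P`_(j + s).
have hPQ : P = Q * 'X^s.
  apply/polyP => m; rewrite coefMXn; case: ltnP => hm; first exact: Ps.
  rewrite coef_poly subnK //; case: ltnP => // hm2.
  have hs : (size P <= m)%N by lia.
  by move/leq_sizeP: hs => /(_ m (leqnn m)).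
have Q0 : Q != 0 by apply: contraNneq P0 => q0; rewrite hPQ q0 mul0r.
have sQ : (size Q <= size P - s)%N by apply: size_poly.
have hr i : (P.[alpha ^+ i] == 0) = root Q (alpha ^+ i).
  by rewrite hPQ hornerM hornerXn mulf_eq0 expf_eq0 expf_eq0 (negbTE a0) !andbF orbF.
pose rs := map (fun i : 'I_n => alpha ^+ i) (filter (fun i : 'I_n => root Q (alpha ^+ i)) (enum 'I_n)).
have : (size rs < size Q)%N.
  apply: max_poly_roots => //.
    apply/allP => x /mapP [i]; rewrite mem_filter => /andP [hi _] ->; exact: hi.
  rewrite map_inj_in_uniq ?filter_uniq //; first exact: index_enum_uniq.
  move=> i j _ _ /eqP.
  rewrite (eq_prim_root_expr pr) !modn_small ?ltn_ord // => /eqP; exact: val_inj.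
rewrite /rs size_map size_filter -sum_count big_enum /=.
set S := (\sum_(i in 'I_n) _)%N => h.
suff -> : (\sum_(i < n) ((P.[alpha ^+ i] == 0)%R : nat) = S)%N by rewrite addnC -ltn_subRL; exact: leq_trans h sQ.
by apply: eq_big => // i; rewrite hr.
Qed.

Definition wk (F : fieldType) (n delta : nat) (alpha : F) (U : {poly F}) (k : nat) : nat :=
  \sum_(i < n) (((U * Gvand n delta alpha ord0 i)`_k != 0)%R : nat).

Lemma UG_horner (F : fieldType) n delta (alpha : F) (U : {poly F}) (i : 'I_n) k :
  (U * Gvand n delta alpha ord0 i)`_k = (\poly_(nu < delta.+1) cf U k nu).[alpha ^+ i].
Proof.
rewrite coef_uG horner_poly; apply: eq_bigr => nu _.
by rewrite mulrC exprM.
Qed.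

Lemma wk_bound (F : fieldType) n delta (alpha : F) (U : {poly F}) k s t :
  n.-primitive_root alpha ->
  (exists2 e, (e <= delta)%N & cf U k e != 0) ->
  (forall nu, (nu < s)%N -> cf U k nu = 0) ->
  (forall nu, (t < nu)%N -> (nu <= delta)%N -> cf U k nu = 0) ->
  (n + s <= wk n delta alpha U k + t)%N.
Proof.
move=> pr [e he ce] hs ht.
set P := \poly_(nu < delta.+1) cf U k nu.
have P0 : P != 0.
  by apply/eqP => /polyP /(_ e); rewrite coef_poly ltnS he coef0; apply/eqP.
have Ps : forall nu, (nu < s)%N -> P`_nu = 0.
  by move=> nu hnu; rewrite coef_poly hs //; case: ifP.
have sP : (size P <= t.+1)%N.
  apply/leq_sizeP => j hj; rewrite coef_poly; case: ifP => // hj2.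
  by apply: ht => //; rewrite -ltnS.
have := RB pr P0 Ps.
have hw : (wk n delta alpha U k + \sum_(i < n) ((P.[alpha ^+ i] == 0)%R : nat) = n)%N.
  rewrite /wk -big_split /= -[X in _ = X]card_ord -sum1_card.
  by apply: eq_bigr => i _; rewrite UG_horner; case: eqP.
move: hw sP; set Z := (\sum_(i < n) _)%N; set W := wk _ _ _ _ _.
set sz := size P; clearbody Z W sz.
lia.
Qed.

Lemma count_seq (F : fieldType) (s : seq F) N : (size s <= N)%N ->
  count (fun a : F => a != 0%R) s = (\sum_(k < N) ((nth 0 s k != 0)%R : nat))%N.
Proof.
elim: s N => [|x s IH] [|N] //=.
- by rewrite big_ord0.
- by move=> _; rewrite big1 // => k _; rewrite nth_nil eqxx.
- by move=> hs; rewrite big_ord_recl /= (IH N).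
Qed.

Lemma cfE (F : fieldType) (U : {poly F}) k nu : (nu <= k)%N -> cf U k nu = U`_(k - nu).
Proof. by rewrite /cf ltnNge => ->. Qed.

Lemma cf0 (F : fieldType) (U : {poly F}) k nu : (k < nu)%N -> cf U k nu = 0.
Proof. by rewrite /cf => ->. Qed.

Lemma part4 (F : fieldType) n delta (alpha : F) : (0 < n)%N ->
  n.-primitive_root alpha -> (delta < n)%N ->
  MDS n delta (im_mx (Gvand n delta alpha)).
Proof.
move=> n0 pr dn.
have a0 : alpha != 0.
  apply/eqP=> a0; move: (prim_expr_order pr); rewrite a0 expr0n eqn0Ngt n0 /=.
  by move/eqP; rewrite eq_sym oner_eq0.
split.
- exists (Gvand n delta alpha); split.
  + by exists 1%:M; rewrite mul1mx.
  + apply/eqP => /matrixP /(_ ord0 (Ordinal n0)) /eqP.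
    by rewrite [X in _ == X]mxE -size_poly_eq0 size_Gi.
  + rewrite /wt -[X in _ = (X * _)%N]card_ord -sum_nat_const.
    apply: eq_big => // i _.
    rewrite (@count_seq _ _ delta.+1) ?size_Gi //.
    rewrite -[X in _ = X]card_ord -sum1_card; apply: eq_bigr => k _.
    by rewrite Gi_poly coef_poly ltn_ord expf_neq0.
- move=> c [u ->] c0.
  set U := u ord0 ord0.
  have U0 : U != 0.
    apply: contraNneq c0 => hU; apply/eqP/matrixP => i j.
    by rewrite !ord1 mulG_entry -/U hU mul0r mxE.
  set N := (size U + delta.+1)%N.
  have -> : wt (u *m Gvand n delta alpha) = (\sum_(k < N) wk n delta alpha U k)%N.
    rewrite /wk exchange_big /=; apply: eq_bigr => i _.
    rewrite mulG_entry -/U (@count_seq _ _ N) //.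
    apply: leq_trans (size_mul_leq _ _) _; rewrite size_Gi // /N; lia.
  set b := (size U).-1.
  have sU : (0 < size U)%N by rewrite size_poly_gt0.
  have hb : U`_b != 0 by rewrite -lead_coefE lead_coef_eq0.
  have hasU : has (fun x : F => x != 0) U.
    by apply/(has_nthP 0); exists b => //; rewrite /b prednK.
  set a := find (fun x : F => x != 0) U.
  have ha : U`_a != 0 := nth_find 0 hasU.
  have hbelow t : (t < a)%N -> U`_t = 0.
    by move=> ht; apply/eqP; move: (before_find 0 ht) => /negbFE.
  have hab : (a <= b)%N by move: hasU; rewrite has_find -/a /b => h; rewrite -ltnS prednK.
  have habove t : (b < t)%N -> U`_t = 0.
    move=> ht; have hs : (size U <= t)%N by rewrite -(prednK sU).
    by move/leq_sizeP: hs => /(_ t (leqnn t)).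
  apply: (comb (a := a) (L := b - a)) => //.
  + by rewrite /N /b; lia.
  + move=> j hj; apply: (wk_bound pr).
    * by exists j => //; rewrite cfE ?leq_addl // addnK.
    * move=> nu hnu; rewrite cfE; last by lia.
      by apply: habove; lia.
    * move=> nu hnu _; case: (ltnP (a + j) nu) => h; first by rewrite cf0.
      by rewrite cfE // hbelow //; lia.
  + move=> j hj; apply: (wk_bound pr).
    * exists j => //; rewrite cfE; last by lia.
      by have -> : (a + (b - a) + j - j = b)%N by lia.
    * move=> nu hnu; rewrite cfE; last by lia.
      by apply: habove; lia.
    * by move=> nu h1 h2; lia.
  + move=> m hm; rewrite -(leq_add2r m) -addnA; apply: (wk_bound pr).
    * exists m; first by lia.
      rewrite cfE; last by lia.
      by have -> : (a + (b - a) + m - m = b)%N by lia.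
    * move=> nu hnu; rewrite cfE; last by lia.
      by apply: habove; lia.
    * move=> nu hnu _; case: (ltnP (a + (b - a) + m) nu) => h; first by rewrite cf0.
      by rewrite cfE // hbelow //; lia.
Qed.


Theorem proposition4p2 (F : finFieldType) (n : nat) (alpha : F) (delta : nat) :
  (0 < n)%N -> coprime n #|F| -> n.-primitive_root alpha ->
  [/\ (* sigma is an F-algebra automorphism of A with sigma(x) = alpha x *)
      linear (sigmaA n alpha) /\
      monoid_morphism (sigmaA n alpha),
      bijective (sigmaA n alpha),
      sigmaA n alpha 'qX = alpha *: 'qX,
      (* im G is sigma-cyclic *)
      sigma_cyclic (sigmaA n alpha) (im_mx (Gvand n delta alpha)) &
      (* if delta < n: sigma-cyclic MDS convolutional code with params (n,1,delta) *)
      (delta < n)%N ->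
        conv_code n 1 delta (im_mx (Gvand n delta alpha)) /\
        MDS n delta (im_mx (Gvand n delta alpha))].
Proof.
move=> n0 cop pr.
have an := prim_expr_order pr.
have [h1 h2 h3] := part1 n0 an.
split => //; first exact: part2.
by move=> dn; split; [exact: part3 | exact: part4].
Qed.
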